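(* Let $p\neq 2$ be a prime and $G=Z_{p^{\lambda_1}}\times\cdots\times Z_{p^{\lambda_n}}$ with $0<\lambda_1<\cdots<\lambda_n$. If $n\ge 3$ and $\lambda_n-\lambda_{n-1}=1$, then $J(G)$ has precisely two maximal down-set chains, namely $D_1(G)=\{J(i,1):i\in\{1,\dots,n\}\}$ and $$D_2'(G)=\{J(n-1,j):j\in\{1,\dots,\lambda_{n-1}-\lambda_{n-2}\}\}\cup\{J(n,j):j\in\{1,\dots,\lambda_{n-1}-\lambda_{n-2}+1\}\}.$$
   Context: Tuples are ordered componentwise; for $\mathbf 0\le\mathbf a\le(\lambda_1,\dots,\lambda_n)$, $T(\mathbf a)$ is the set of $(g_1,\dots,g_n)\in G$ with $|g_i|=p^{a_i}$, and $R(\mathbf a)=\bigcup_{\mathbf b\le\mathbf a}T(\mathbf b)$. For $i\in\{1,\dots,n\}$ and $j\in\{1,\dots,\lambda_i\}$, $J(i,j)=R(\mathbf a)$ where $a_k=j$ for $k\ge i$ and $a_k=\max\{0,\,j-(\lambda_i-\lambda_k)\}$ for $k<i$. $J(G)$ is the set of all $J(i,j)$, partially ordered by inclusion. A down set of a poset $P$ is a subset $X$ such that $x\le y\in X$ implies $x\in X$; a down-set chain is a subset that is both a chain and a down set; it is maximal if it is not contained in a strictly larger down-set chain. *)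

(* Defs.v *)
From mathcomp Require Import all_boot all_order all_algebra all_fingroup.
Set Implicit Arguments. Unset Strict Implicit. Unset Printing Implicit Defensive.

(* Paper indices 1..n are used for lam, a, i; the k-th component of an
   element of G (k : 'I_n, 0-based) corresponds to paper index k.+1. *)

Definition Gt (p n : nat) (lam : nat -> nat) : finType :=
  {dffun forall k : 'I_n, 'Z_(p ^ lam k.+1)}.

Definition Tset (p n : nat) (lam : nat -> nat) (b : 'I_n -> nat)
  : {set Gt p n lam} :=
  [set g : Gt p n lam | [forall k : 'I_n, #[g k]%g == p ^ b k]].

Definition Rset (p n : nat) (lam : nat -> nat) (a : nat -> nat)
  : {set Gt p n lam} :=
  \bigcup_(b : {ffun 'I_n -> 'I_(lam n).+1} | [forall k : 'I_n, b k <= a k.+1])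
     Tset p lam (fun k => nat_of_ord (b k)).

(* J(i,j); for k < i, lam_k <= lam_i so truncated subtraction gives
   max{0, j - (lam_i - lam_k)}. *)
Definition Jset (p n : nat) (lam : nat -> nat) (i j : nat) : {set Gt p n lam} :=
  Rset p n lam (fun k => if i <= k then j else j - (lam i - lam k)).

Definition JG (p n : nat) (lam : nat -> nat) : {set {set Gt p n lam}} :=
  [set S | [exists i : 'I_n, [exists j : 'I_(lam i.+1),
              S == Jset p n lam i.+1 j.+1]]].

Definition is_down_set_chain (T : finType) (P C : {set {set T}}) : Prop :=
  C \subset P /\
  (forall x y, x \in C -> y \in C -> (x \subset y) || (y \subset x)) /\
  (forall x y, x \in P -> y \in C -> x \subset y -> x \in C).

Definition is_maximal_down_set_chain (T : finType) (P C : {set {set T}}) : Prop :=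
  is_down_set_chain P C /\
  forall C', is_down_set_chain P C' -> C \subset C' -> C' = C.

Definition D1 (p n : nat) (lam : nat -> nat) : {set {set Gt p n lam}} :=
  [set S | [exists i : 'I_n, S == Jset p n lam i.+1 1]].

Definition D2' (p n : nat) (lam : nat -> nat) : {set {set Gt p n lam}} :=
  [set S | [exists j : 'I_(lam n.-1 - lam n.-2),
              S == Jset p n lam n.-1 j.+1]]
  :|: [set S | [exists j : 'I_(lam n.-1 - lam n.-2).+1,
              S == Jset p n lam n j.+1]].

(* Main.v *)
Require Import Defs.
From mathcomp Require Import all_boot all_order all_algebra all_fingroup all_solvable.
From mathcomp Require Import zify.

Lemma ordZ (m e : nat) : 1 < m -> e %| m -> #[(Zp1 : 'Z_m) ^+ e]%g = m %/ e.
Proof.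
move=> Hm He. rewrite orderXgcd.
have -> : #[(Zp1 : 'Z_m)]%g = m by rewrite order_Zp1 Zp_cast.
by rewrite (gcdn_idPr He).
Qed.

Lemma ordZp (p l a : nat) : prime p -> 0 < l -> a <= l ->
  #[(Zp1 : 'Z_(p ^ l)) ^+ (p ^ (l - a))]%g = p ^ a.
Proof.
move=> pp l0 al. have p1 := prime_gt1 pp.
rewrite ordZ.
- rewrite -{1}(subnK al) expnD mulKn //. by rewrite expn_gt0 ltnW.
- by rewrite -(exp1n l) ltn_exp2r // -lt0n.
- by rewrite dvdn_exp2l // leq_subr.
Qed.

Lemma Rsub (p n : nat) (lam a a' : nat -> nat) :
  (forall k, 0 < k <= n -> a k <= a' k) -> Rset p n lam a \subset Rset p n lam a'.
Proof.
move=> H; apply/subsetP => g /bigcupP [b Hb Hg]; apply/bigcupP; exists b => //.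
apply/forallP => k; apply: leq_trans (forallP Hb k) (H _ _).
by rewrite ltn_ord.
Qed.

Lemma Rnotsub (p n : nat) (lam a a' : nat -> nat) : prime p ->
  (forall k, 0 < k <= n -> 0 < lam k /\ lam k <= lam n /\ a k <= lam k) ->
  (exists k0, 0 < k0 <= n /\ a' k0 < a k0) ->
  ~~ (Rset p n lam a \subset Rset p n lam a').
Proof.
move=> pp H [k0 [Hk0 Hlt]].
pose g : Gt p n lam := [ffun k : 'I_n => ((Zp1 : 'Z_(p ^ lam k.+1)) ^+ (p ^ (lam k.+1 - a k.+1)))%g].
have Hk (k : 'I_n) : 0 < k.+1 <= n by rewrite ltn_ord.
have go (k : 'I_n) : #[g k]%g = p ^ a k.+1.
  have [l0 [ln al]] := H _ (Hk k).
  by rewrite ffunE ordZp.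
apply/negP => /subsetP Hs.
have : g \in Rset p n lam a.
  apply/bigcupP.
  exists [ffun k : 'I_n => (inord (a k.+1) : 'I_(lam n).+1)].
    apply/forallP => k; rewrite ffunE /= inordK //.
    have [l0 [ln al]] := H _ (Hk k); lia.
  rewrite inE; apply/forallP => k; rewrite go ffunE /= inordK //.
  have [l0 [ln al]] := H _ (Hk k); lia.
move/Hs/bigcupP => [b Hb]; rewrite inE => /forallP Hg.
have k0n : k0.-1 < n by lia.
have := Hg (Ordinal k0n); rewrite go /= prednK; last by lia.
rewrite eqn_exp2l ?prime_gt1 // => /eqP E.
have := forallP Hb (Ordinal k0n); rewrite /= prednK; last by lia.
rewrite -E. lia.
Qed.

Lemma monoT (n : nat) (lam : nat -> nat) :
  (forall i, 1 <= i < n -> lam i < lam i.+1) ->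
  forall x y, 1 <= x -> y <= n -> x <= y -> lam x + (y - x) <= lam y.
Proof.
move=> H x y x1; elim: y => [|y IH] yn xy; first by lia.
case: (ltngtP x y.+1) xy => // [xy _|<- _]; last by lia.
have := IH (ltnW yn) xy; have := H y; lia.
Qed.

Section S.
Variables (p n : nat) (lam : nat -> nat).
Hypotheses (pp : prime p) (H0 : 0 < lam 1)
  (Hlam : forall i, 1 <= i < n -> lam i < lam i.+1)
  (Hn : 3 <= n) (Hd : lam n - lam n.-1 = 1).

Local Notation J := (Jset p n lam).

Ltac mp x y := try (have : lam x + (y - x) <= lam y by apply: (@monoT n lam Hlam); lia);
  try (have : lam y + (x - y) <= lam x by apply: (@monoT n lam Hlam); lia).

Lemma Jsub i j i' j' :
  (forall k, 0 < k <= n -> (if i <= k then j else j - (lam i - lam k)) <=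
                           (if i' <= k then j' else j' - (lam i' - lam k))) ->
  J i j \subset J i' j'.
Proof. exact: Rsub. Qed.

Lemma Jnotsub i j i' j' :
  (forall k, 0 < k <= n -> (if i <= k then j else j - (lam i - lam k)) <= lam k) ->
  (exists k0, 0 < k0 <= n /\ (if i' <= k0 then j' else j' - (lam i' - lam k0)) <
                           (if i <= k0 then j else j - (lam i - lam k0))) ->
  ~~ (J i j \subset J i' j').
Proof.
move=> H1 H2; apply: Rnotsub => // k Hk; split; last split; last exact: H1.
- mp 1 k; lia.
- mp k n; lia.
Qed.


Local Notation d := (lam n.-1 - lam n.-2).

Lemma JG_mem i j : 0 < i <= n -> 0 < j <= lam i -> J i j \in JG p n lam.
Proof.
move=> Hi Hj; rewrite inE; apply/existsP.
have hi : i.-1 < n by lia.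
exists (Ordinal hi); apply/existsP.
have ei : i.-1.+1 = i by lia.
have hj : j.-1 < lam (Ordinal hi).+1 by rewrite /= ei; lia.
by exists (Ordinal hj); rewrite /= !prednK //; lia.
Qed.

Lemma JG_inv S : S \in JG p n lam ->
  exists i j, [/\ 0 < i <= n, 0 < j <= lam i & S = J i j].
Proof.
rewrite inE => /existsP [i /existsP [j /eqP ->]].
exists i.+1, j.+1; split => //; have := ltn_ord i; have := ltn_ord j; lia.
Qed.

Lemma D1_mem i : 0 < i <= n -> J i 1 \in D1 p n lam.
Proof.
move=> Hi; rewrite inE; apply/existsP.
have hi : i.-1 < n by lia.
by exists (Ordinal hi); rewrite /= prednK //; lia.
Qed.

Lemma D1_inv S : S \in D1 p n lam -> exists i, 0 < i <= n /\ S = J i 1.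
Proof.
rewrite inE => /existsP [i /eqP ->]; exists i.+1; split => //; have := ltn_ord i; lia.
Qed.

Lemma D2_mem1 j : 0 < j <= d -> J n.-1 j \in D2' p n lam.
Proof.
move=> Hj; rewrite inE; apply/orP; left; rewrite inE; apply/existsP.
have hj : j.-1 < d by lia.
by exists (Ordinal hj); rewrite /= prednK //; lia.
Qed.

Lemma D2_mem2 j : 0 < j <= d.+1 -> J n j \in D2' p n lam.
Proof.
move=> Hj; rewrite inE; apply/orP; right; rewrite inE; apply/existsP.
have hj : j.-1 < d.+1 by lia.
by exists (Ordinal hj); rewrite /= prednK //; lia.
Qed.

Lemma D2_inv S : S \in D2' p n lam ->
  exists i j, ((i = n.-1 /\ 0 < j <= d) \/ (i = n /\ 0 < j <= d.+1)) /\ S = J i j.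
Proof.
rewrite inE => /orP [];  rewrite inE => /existsP [j /eqP ->].
  exists n.-1, j.+1; split => //; left; have := ltn_ord j; lia.
exists n, j.+1; split => //; right; have := ltn_ord j; lia.
Qed.


Lemma lamn : lam n = (lam n.-1).+1.
Proof. mp n.-1 n; lia. Qed.

Ltac ar k := have := lamn;
  repeat (case: ifP => ?); mp k n; mp k n.-1; mp k n.-2; mp 1 k; mp 1 n; mp n.-2 n.-1; lia.

Lemma c1 i j : 0 < i <= n -> 0 < j <= lam i -> J i j \in D1 p n lam \/ J n 2 \subset J i j.
Proof.
move=> Hi Hj; case: (ltngtP j 1) => [|jb|->]; [lia| |by left; apply: D1_mem].
right; apply: Jsub => k Hk; repeat (case: ifP => ?); mp k i; mp i n; mp k n; lia.
Qed.

Lemma c2 i j : 0 < i <= n -> 0 < j <= lam i -> J i j \in D2' p n lam \/ J n.-2 1 \subset J i j.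
Proof.
move=> Hi Hj.
have [ib|] := leqP i n.-2.
  right; apply: Jsub => k Hk; repeat (case: ifP => ?); mp k n.-2; mp k i; lia.
move=> ib; have [->|ne] := eqVneq i n.-1.
  have [jd|jd] := leqP j d; first by left; apply: D2_mem1; lia.
  right; apply: Jsub; move=> k Hk; ar k.
have -> : i = n by move: ne => /eqP; lia.
have [jd|jd] := leqP j d.+1; first by left; apply: D2_mem2; lia.
right; apply: Jsub; move=> k Hk; ar k.
Qed.

Lemma e1 i : 0 < i <= n -> ~~ (J n 2 \subset J i 1).
Proof.
move=> Hi; apply: Jnotsub; first by move=> k Hk; ar k.
by exists n; split; [lia | rewrite leqnn; case: ifP => ?; lia].
Qed.

Lemma e2 y : y \in D2' p n lam -> ~~ (J n.-2 1 \subset y).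
Proof.
move=> /D2_inv [i [j [H ->]]]; apply: Jnotsub; first by move=> k Hk; ar k.
exists n.-2; split; first lia.
rewrite leqnn; have := lamn; case: H => [[-> ?]|[-> ?]]; case: ifP => ?; mp n.-2 n.-1; lia.
Qed.

Lemma f1 x y : x \in D1 p n lam -> y \in D1 p n lam -> (x \subset y) || (y \subset x).
Proof.
move=> /D1_inv [i [Hi ->]] /D1_inv [i' [Hi' ->]].
have [ii|ii] := leqP i i'; apply/orP; [right|left]; apply: Jsub => k Hk;
  repeat (case: ifP => ?); mp k i; mp k i'; lia.
Qed.

Lemma D2sub i j i' j' :
  ((i = n.-1 /\ 0 < j <= d) \/ (i = n /\ 0 < j <= d.+1)) ->
  ((i' = n.-1 /\ 0 < j' <= d) \/ (i' = n /\ 0 < j' <= d.+1)) ->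
  (if i == n then (j.*2).-1 else j.*2) <= (if i' == n then (j'.*2).-1 else j'.*2) ->
  J i j \subset J i' j'.
Proof.
have nn : n.-1 == n = false by apply/eqP; lia.
move=> [[-> ?]|[-> ?]] [[-> ?]|[-> ?]]; rewrite ?eqxx ?nn => hk; apply: Jsub; move=> k Hk; ar k.
Qed.

Lemma f2 x y : x \in D2' p n lam -> y \in D2' p n lam -> (x \subset y) || (y \subset x).
Proof.
move=> /D2_inv [i [j [H ->]]] /D2_inv [i' [j' [H' ->]]].
set a := (if i == n then (j.*2).-1 else j.*2).
set b := (if i' == n then (j'.*2).-1 else j'.*2).
have [ab|ab] := leqP a b; apply/orP; [left|right]; apply: D2sub => //; exact: ltnW.
Qed.


Lemma main_sec :
  D1 p n lam != D2' p n lam /\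
  forall C : {set {set Gt p n lam}},
    is_maximal_down_set_chain (JG p n lam) C <->
    (C = D1 p n lam \/ C = D2' p n lam).
Proof.
have l3 : lam 1 + (n - 1) <= lam n by apply: (@monoT n lam Hlam); lia.
have ln := lamn. mp n.-2 n.-1 => l4.
have A2 : J n 2 \in D2' p n lam by apply: D2_mem2; lia.
have A2G : J n 2 \in JG p n lam by apply: JG_mem; lia.
have B1 : J n.-2 1 \in D1 p n lam by apply: D1_mem; lia.
have E1 y : y \in D1 p n lam -> ~~ (J n 2 \subset y).
  by move=> /D1_inv [i [Hi ->]]; apply: e1.
have E2 := e2.
have nA : J n 2 \notin D1 p n lam by apply/negP => /E1; rewrite subxx.
have D1G : D1 p n lam \subset JG p n lam.
  by apply/subsetP => x /D1_inv [i [Hi ->]]; apply: JG_mem; mp 1 i; lia.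
have D2G : D2' p n lam \subset JG p n lam.
  apply/subsetP => x /D2_inv [i [j [H ->]]]; apply: JG_mem; case: H => [[-> ?]|[-> ?]]; lia.
have B1G : J n.-2 1 \in JG p n lam by apply: (subsetP D1G).
have C1 x : x \in JG p n lam -> x \in D1 p n lam \/ J n 2 \subset x.
  by move=> /JG_inv [i [j [Hi Hj ->]]]; apply: c1.
have C2 x : x \in JG p n lam -> x \in D2' p n lam \/ J n.-2 1 \subset x.
  by move=> /JG_inv [i [j [Hi Hj ->]]]; apply: c2.
have inc : ~~ ((J n 2 \subset J n.-2 1) || (J n.-2 1 \subset J n 2)).
  by rewrite negb_or E1 // E2.
have DC1 : is_down_set_chain (JG p n lam) (D1 p n lam).
  split => //; split; first exact: f1.
  move=> x y xG yD xy; case: (C1 x xG) => // sx.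
  by have := E1 y yD; rewrite (subset_trans sx xy).
have DC2 : is_down_set_chain (JG p n lam) (D2' p n lam).
  split => //; split; first exact: f2.
  move=> x y xG yD xy; case: (C2 x xG) => // sx.
  by have := E2 y yD; rewrite (subset_trans sx xy).
split.
  by apply/negP => /eqP E; move: nA; rewrite E A2.
move=> C; split.
  move=> [[CG [Cch Cdn]] Cmax].
  have [inC|notC] := boolP (J n 2 \in C).
    right; symmetry; apply: Cmax => //; apply/subsetP => x xC.
    have xG := subsetP CG x xC.
    case: (C2 x xG) => // sx.
    have := Cdn _ _ B1G xC sx => B1C.
    by have := Cch _ _ inC B1C; rewrite (negbTE inc).
  left; symmetry; apply: Cmax => //; apply/subsetP => x xC.
  have xG := subsetP CG x xC.
  case: (C1 x xG) => // sx.
  by have := Cdn _ _ A2G xC sx; rewrite (negbTE notC).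
move=> [->|->]; split => // C' [C'G [C'ch C'dn]] sub; apply/eqP; rewrite eqEsubset; apply/andP; split => //.
  apply/subsetP => x xC; have xG := subsetP C'G x xC.
  case: (C1 x xG) => // sx.
  have A2C := C'dn _ _ A2G xC sx.
  by have := C'ch _ _ A2C (subsetP sub _ B1); rewrite (negbTE inc).
apply/subsetP => x xC; have xG := subsetP C'G x xC.
case: (C2 x xG) => // sx.
have B1C := C'dn _ _ B1G xC sx.
by have := C'ch _ _ (subsetP sub _ A2) B1C; rewrite (negbTE inc).
Qed.

End S.

Theorem mainTheorem20 (p n : nat) (lam : nat -> nat) :
  prime p -> p != 2 ->
  0 < lam 1 -> (forall i, 1 <= i < n -> lam i < lam i.+1) ->
  3 <= n -> lam n - lam n.-1 = 1 ->
  D1 p n lam != D2' p n lam /\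
  forall C : {set {set Gt p n lam}},
    is_maximal_down_set_chain (JG p n lam) C <->
    (C = D1 p n lam \/ C = D2' p n lam).
Proof.
move=> pp _ H0 Hlam Hn Hd; exact: main_sec.
Qed.
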